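(* Let $A$ be an MV-algebra, $d$ a $(\odot,\vee)$-derivation on $A$, and $u\in A$ with $u\le d(1)$. Define $d^u:A\to A$ by $d^u(1)=u$ and $d^u(x)=d(x)$ for $x\ne 1$. Then $d^u$ is a $(\odot,\vee)$-derivation on $A$. In particular, for every $u\in A$ the map $\chi^{(u)}$ defined by $\chi^{(u)}(1)=u$ and $\chi^{(u)}(x)=x$ for $x\neq 1$ is a $(\odot,\vee)$-derivation on $A$.
   Context: An MV-algebra is an algebra $(A,\oplus,{}^*,0)$ of type $(2,1,0)$ satisfying: $x\oplus(y\oplus z)=(x\oplus y)\oplus z$, $x\oplus y=y\oplus x$, $x\oplus 0=x$, $x^{**}=x$, $x\oplus 0^*=0^*$, $(x^*\oplus y)^*\oplus y=(y^*\oplus x)^*\oplus x$. Put $1=0^*$ and $x\odot y=(x^*\oplus y^* )^*$. The natural order is $x\le y$ iff $x^*\oplus y=1$, with lattice operations $x\vee y=(x\odot y^* )\oplus y$, $x\wedge y=x\odot(x^*\oplus y)$. A $(\odot,\vee)$-derivation on $A$ is a map $d:A\to A$ with $d(x\odot y)=(d(x)\odot y)\vee(x\odot d(y))$ for all $x,y\in A$. *)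

(* Defs.v *)
Set Implicit Arguments.

Record MVAlgebra : Type := {
  mv_car :> Type;
  mv_oplus : mv_car -> mv_car -> mv_car;
  mv_neg : mv_car -> mv_car;
  mv_zero : mv_car;
  mv_assoc : forall x y z, mv_oplus x (mv_oplus y z) = mv_oplus (mv_oplus x y) z;
  mv_comm : forall x y, mv_oplus x y = mv_oplus y x;
  mv_zero_r : forall x, mv_oplus x mv_zero = x;
  mv_negK : forall x, mv_neg (mv_neg x) = x;
  mv_one_abs : forall x, mv_oplus x (mv_neg mv_zero) = mv_neg mv_zero;
  mv_luk : forall x y,
    mv_oplus (mv_neg (mv_oplus (mv_neg x) y)) y =
    mv_oplus (mv_neg (mv_oplus (mv_neg y) x)) x
}.

Section Ops.
Variable A : MVAlgebra.
Definition mv_one : A := mv_neg A (mv_zero A).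
Definition mv_odot (x y : A) : A :=
  mv_neg A (mv_oplus A (mv_neg A x) (mv_neg A y)).
Definition mv_le (x y : A) : Prop := mv_oplus A (mv_neg A x) y = mv_one.
Definition mv_join (x y : A) : A := mv_oplus A (mv_odot x (mv_neg A y)) y.
Definition mv_meet (x y : A) : A := mv_odot x (mv_oplus A (mv_neg A x) y).

Definition is_odot_join_derivation (d : A -> A) : Prop :=
  forall x y, d (mv_odot x y) = mv_join (mv_odot (d x) y) (mv_odot x (d y)).
End Ops.
Arguments mv_one : clear implicits.
Arguments mv_odot {A}. Arguments mv_le {A}. Arguments mv_join {A}.
Arguments mv_meet {A}. Arguments is_odot_join_derivation {A}.

(* Main.v *)
Require Import Defs.
From Stdlib Require Import Classical.

Section L.
Variable A : MVAlgebra.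
Local Notation o := (mv_oplus A).
Local Notation n := (mv_neg A).
Local Notation z := (mv_zero A).
Local Notation one := (mv_one A).
Implicit Types a b c e w x y : A.

Lemma zero_l x : o z x = x.
Proof. rewrite mv_comm; apply mv_zero_r. Qed.
Lemma neg_one : n one = z.
Proof. unfold mv_one; apply mv_negK. Qed.
Lemma one_r x : o x one = one.
Proof. apply mv_one_abs. Qed.
Lemma one_l x : o one x = one.
Proof. rewrite mv_comm; apply one_r. Qed.
Lemma negx_x x : o (n x) x = one.
Proof.
  pose proof (mv_luk A x one) as H.
  rewrite one_r in H. unfold mv_one in H. rewrite mv_negK, zero_l in H.
  symmetry; exact H.
Qed.
Lemma odot1l x : mv_odot one x = x.
Proof. unfold mv_odot. rewrite neg_one, zero_l, mv_negK; reflexivity. Qed.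
Lemma odotC x y : mv_odot x y = mv_odot y x.
Proof. unfold mv_odot. rewrite mv_comm; reflexivity. Qed.
Lemma odot1r x : mv_odot x one = x.
Proof. rewrite odotC; apply odot1l. Qed.
Lemma joinC a b : mv_join a b = mv_join b a.
Proof. unfold mv_join, mv_odot. rewrite !mv_negK. apply mv_luk. Qed.
Lemma join_le a b : mv_le a b -> mv_join a b = b.
Proof.
  unfold mv_le, mv_join, mv_odot; intro H. rewrite mv_negK, H, neg_one. apply zero_l.
Qed.
Lemma join_xx x : mv_join x x = x.
Proof. apply join_le. unfold mv_le. apply negx_x. Qed.
Lemma le_ex a b : mv_le a b <-> exists w, b = o a w.
Proof.
  split.
  - intro H. exists (mv_odot b (n a)). rewrite mv_comm.
    rewrite <- (join_le _ _ H) at 1. rewrite joinC. reflexivity.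
  - intros [w ->]. unfold mv_le. rewrite mv_assoc, negx_x. apply one_l.
Qed.
Lemma le_trans a b c : mv_le a b -> mv_le b c -> mv_le a c.
Proof.
  rewrite !le_ex. intros [w1 ->] [w2 ->]. exists (o w1 w2). apply eq_sym, mv_assoc.
Qed.
Lemma le_neg a b : mv_le a b -> mv_le (n b) (n a).
Proof. unfold mv_le; intro H. rewrite mv_negK, mv_comm; exact H. Qed.
Lemma le_oplus a b y : mv_le a b -> mv_le (o a y) (o b y).
Proof.
  rewrite !le_ex. intros [w ->]. exists w.
  rewrite <- !mv_assoc, (mv_comm _ w y). reflexivity.
Qed.
Lemma le_odot a b y : mv_le a b -> mv_le (mv_odot a y) (mv_odot b y).
Proof.
  intro H. unfold mv_odot. apply le_neg, le_oplus, le_neg, H.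
Qed.
Lemma le_one x : mv_le x one.
Proof. unfold mv_le. apply one_r. Qed.
Lemma le_sum c w : mv_le c (o w c).
Proof. rewrite le_ex. exists w. apply mv_comm. Qed.
Lemma one_le x : mv_le one x -> x = one.
Proof. unfold mv_le. rewrite neg_one, zero_l. auto. Qed.
Lemma odot_le x y : mv_le (mv_odot x y) x.
Proof.
  rewrite <- (odot1r x) at 2. rewrite (odotC x y), (odotC x one).
  apply le_odot, le_one.
Qed.
Lemma le_join_l c e : mv_le c (mv_join e c).
Proof. unfold mv_join. apply le_sum. Qed.

Lemma main (d : A -> A) (u : A) :
  is_odot_join_derivation d -> mv_le u (d one) ->
  forall du : A -> A, du one = u -> (forall x, x <> one -> du x = d x) ->
  is_odot_join_derivation du.
Proof.
  intros Hd Hu du H1 Hx x y.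
  assert (Key : forall y, mv_le (mv_odot u y) (d y)).
  { intro y0. apply le_trans with (mv_odot (d one) y0).
    - apply le_odot, Hu.
    - pose proof (Hd one y0) as E. rewrite odot1l in E. rewrite E. rewrite joinC. apply le_join_l. }
  destruct (classic (x = one)) as [->|Nx]; destruct (classic (y = one)) as [->|Ny].
  - rewrite odot1l, H1, odot1l, odot1r. symmetry; apply join_xx.
  - rewrite !odot1l, H1, (Hx y Ny). symmetry; apply join_le, Key.
  - rewrite !odot1r, H1, (Hx x Nx). rewrite joinC. symmetry; apply join_le.
    rewrite odotC. apply Key.
  - assert (Nxy : mv_odot x y <> one).
    { intro E. apply Nx, one_le. rewrite <- E. apply odot_le. }
    rewrite (Hx _ Nxy), (Hx x Nx), (Hx y Ny). apply Hd.
Qed.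
End L.

Theorem proposition3p12 (A : MVAlgebra) (d : A -> A) (u : A) :
  is_odot_join_derivation d ->
  mv_le u (d (mv_one A)) ->
  (forall du : A -> A,
     du (mv_one A) = u ->
     (forall x : A, x <> mv_one A -> du x = d x) ->
     is_odot_join_derivation du)
  /\
  (forall (v : A) (chi : A -> A),
     chi (mv_one A) = v ->
     (forall x : A, x <> mv_one A -> chi x = x) ->
     is_odot_join_derivation chi).
Proof.
  intros Hd Hu. split.
  - apply (main A d u Hd Hu).
  - intros v chi H1 Hx. apply (main A (fun x => x) v).
    + intros x y. symmetry; apply join_xx.
    + apply le_one.
    + exact H1.
    + exact Hx.
Qed.
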